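(* Let $\alpha$ be a positive rational number and $v\in\widetilde V$. If $\rho_\alpha(v)=\alpha+4$, then $\alpha$ is an integer.
   Context: For real $\alpha>0$ put $t=\alpha+2$, $u_0=0$, $u_1=1$, $u_{i+2}=tu_{i+1}-u_i$; $\rho_\alpha(0)=0$ and $\rho_\alpha(n)=1+\frac{u_{n-1}}{u_n+1}$ for $n\in\mathbb{N}$. $\widetilde V$ is the set of infinite nonincreasing sequences of nonnegative integers that are eventually $0$, and $\rho_\alpha(v)=\sum_i\rho_\alpha(v_i)$. *)

(* Defs.v *)
From mathcomp Require Import all_boot all_order all_algebra.
Set Implicit Arguments. Unset Strict Implicit. Unset Printing Implicit Defensive.
Import Order.TTheory GRing.Theory Num.Theory.
Local Open Scope ring_scope.

Fixpoint upair (t : rat) (n : nat) : rat * rat :=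
  match n with
  | 0%N => (0, 1)
  | m.+1 => let p := upair t m in (p.2, t * p.2 - p.1)
  end.

Definition u (t : rat) (n : nat) : rat := (upair t n).1.

Definition rho (alpha : rat) (n : nat) : rat :=
  match n with
  | 0%N => 0
  | m.+1 => 1 + u (alpha + 2) m / (u (alpha + 2) m.+1 + 1)
  end.

(* v in V~ : nonincreasing, eventually zero sequence of naturals *)
Definition nonincreasing_seq (v : nat -> nat) : Prop :=
  forall i j : nat, (i <= j)%N -> (v j <= v i)%N.

(* rho_alpha(v) = sum_i rho_alpha(v_i); if v_i = 0 for all i >= N this is the
   finite sum over i < N (independent of such N since rho_alpha(0) = 0). *)
Definition rhoV (alpha : rat) (v : nat -> nat) (N : nat) : rat :=
  \sum_(i < N) rho alpha (v i).

(* Main.v *)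
Require Import Defs.
From mathcomp Require Import all_boot all_order all_algebra.
From mathcomp Require Import ring.
Import Order.TTheory GRing.Theory Num.Theory.
Local Open Scope ring_scope.

Lemma uS t m : u t m.+2 = t * u t m.+1 - u t m.
Proof. by []. Qed.

Lemma cop_step (a b X Y : int) : coprimez a b -> coprimez Y b ->
  coprimez (a * Y - b ^+ 2 * X) b.
Proof.
move=> ha hy.
have -> : a * Y - b ^+ 2 * X = (- (b * X)) * b + a * Y by ring.
rewrite coprimez_sym /coprimez gcdzMDl -/(coprimez b (a * Y)) coprimez_sym.
by rewrite coprimezMl ha hy.
Qed.

Lemma inv (t : rat) m : exists X Y : int,
  u t m.+1 * ((denq t)%:~R ^+ m) = X%:~R /\
  u t m.+2 * ((denq t)%:~R ^+ m.+1) = Y%:~R /\ coprimez Y (denq t).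
Proof.
have hab : coprimez (numq t) (denq t) by rewrite coprimezE coprime_num_den.
have hb : (denq t)%:~R != 0 :> rat by rewrite intr_eq0 denq_neq0.
have ht : t = (numq t)%:~R / (denq t)%:~R by rewrite divq_num_den.
elim: m => [|m [X [Y [hX [hY hc]]]]].
  exists 1, (numq t); split; first by rewrite expr0 mulr1.
  split=> //.
  rewrite uS expr1 /u /=. rewrite subr0 mulr1 {1}ht.
  by rewrite mulfVK.
exists Y, (numq t * Y - denq t ^+ 2 * X); split=> //; split; last first.
  exact: cop_step.
have e1 : u t m.+2 = Y%:~R / (denq t)%:~R ^+ m.+1.
  by rewrite -hY mulfK // expf_neq0.
have e2 : u t m.+1 = X%:~R / (denq t)%:~R ^+ m.
  by rewrite -hX mulfK // expf_neq0.
rewrite uS e1 e2 rmorphB /= !rmorphM /= ?rmorphXn /= {1}ht.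
rewrite !exprS. field. by rewrite hb expf_neq0.
Qed.

Definition P (b : int) (x : rat) := exists p d : int,
  d != 0 /\ coprimez d b /\ x * d%:~R = p%:~R.

Lemma P_int b (k : int) : P b k%:~R.
Proof. exists k, 1; split=> //; split; last by rewrite mulr1.
by rewrite /coprimez gcd1z. Qed.

Lemma PD b x y : P b x -> P b y -> P b (x + y).
Proof.
move=> [p1 [d1 [h1 [c1 e1]]]] [p2 [d2 [h2 [c2 e2]]]].
exists (p1 * d2 + p2 * d1), (d1 * d2); split; first by rewrite mulf_neq0.
split; first by rewrite coprimezMl c1 c2.
rewrite rmorphD !rmorphM /= -e1 -e2; ring.
Qed.

Lemma P_rho (t : rat) n : P (denq t) (1 + u t n.-1 / (u t n + 1)).
Proof.
case: n => [|[|m]] /=.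
- by rewrite /u /= mul0r addr0; exact: (P_int _ 1).
- by rewrite /u /= mul0r addr0; exact: (P_int _ 1).
have hb : (denq t)%:~R != 0 :> rat by rewrite intr_eq0 denq_neq0.
have [X [Y [hX [hY hc]]]] := inv t m.
have e1 : u t m.+2 = Y%:~R / (denq t)%:~R ^+ m.+1.
  by rewrite -hY mulfK // expf_neq0.
have e2 : u t m.+1 = X%:~R / (denq t)%:~R ^+ m.
  by rewrite -hX mulfK // expf_neq0.
have hbm : (denq t)%:~R ^+ m.+1 != 0 :> rat by rewrite expf_neq0.
have eD : (u t m.+2 + 1) * (denq t)%:~R ^+ m.+1 = (Y + denq t ^+ m.+1)%:~R.
  by rewrite mulrDl hY mul1r rmorphD /= rmorphXn.
have e3 : u t m.+2 + 1 = (Y + denq t ^+ m.+1)%:~R / (denq t)%:~R ^+ m.+1.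
  by rewrite -eD mulfK.
have [D0|Dn] := eqVneq (Y + denq t ^+ m.+1) 0.
  have -> : u t m.+2 + 1 = 0 by rewrite e3 D0 mul0r.
  by rewrite invr0 mulr0 addr0; exact: (P_int _ 1).
exists (Y + denq t ^+ m.+1 + X * denq t), (Y + denq t ^+ m.+1); split=> //.
split.
  rewrite coprimez_sym /coprimez exprSr addrC gcdzMDl -/(coprimez _ _).
  by rewrite coprimez_sym.
have hD : ((Y + denq t ^+ m.+1)%:~R : rat) != 0 by rewrite intr_eq0.
rewrite e3 e2; set Dq := ((Y + _)%:~R : rat) in hD *.
rewrite rmorphD rmorphM /= -/Dq exprS; field.
apply/and3P; split; [exact: expf_neq0 | exact: hb | by rewrite -rmorphD].
Qed.

Lemma P_rhoa alpha n : P (denq (alpha + 2)) (rho alpha n).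
Proof. case: n => [|n]; first exact: (P_int _ 0). exact: (P_rho _ n.+1). Qed.

Theorem proposition4 (alpha : rat) (v : nat -> nat) (N : nat) :
  0 < alpha ->
  nonincreasing_seq v ->
  (forall i : nat, (N <= i)%N -> v i = 0%N) ->
  rhoV alpha v N = alpha + 4 ->
  alpha \is a Num.int.
Proof.
move=> _ _ _ hs.
set t := alpha + 2.
have hP : P (denq t) (rhoV alpha v N).
  rewrite /rhoV; apply: (big_ind (P (denq t))); [exact: (P_int _ 0)|exact: PD|].
  by move=> i _; exact: P_rhoa.
have hPt : P (denq t) t.
  have e : t = rhoV alpha v N + (- 2)%:~R by rewrite hs /t; rewrite rmorphN /=; ring.
  rewrite [X in P _ X]e; apply: PD => //; exact: (P_int _ (-2)).
have tint : t \is a Num.int.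
  case: hPt => p [d [hd [hc he]]].
  have hab : coprimez (denq t) (numq t).
    by rewrite coprimez_sym coprimezE coprime_num_den.
  have hb : (denq t)%:~R != 0 :> rat by rewrite intr_eq0 denq_neq0.
  have ei : numq t * d = p * denq t.
    have hn : t * (denq t)%:~R = (numq t)%:~R.
      by rewrite -{1}(divq_num_den t) divfK.
    apply/eqP; rewrite -(eqr_int rat) !rmorphM /= -he -hn; apply/eqP; ring.
  have h1 : (denq t %| d)%Z.
    by rewrite -(Gauss_dvdzr _ hab) ei dvdz_mull.
  have h2 : (denq t %| 1)%Z.
    have := dvdz_gcd (denq t) d (denq t); rewrite h1 dvdzz /=. move: hc; by rewrite /coprimez => /eqP ->.
  rewrite Qint_def; move: h2 (denq_gt0 t).
  case: (denq t) => [[|[|k]]|k] //=.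
have -> : alpha = t - 2%:~R by rewrite /t; ring.
by rewrite rpredB // intr_int.
Qed.
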